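(* Let $G=(V,E)$ be a (finite or infinite) graph and $\psi:(0,+\infty)\to\mathbb R$ a $C^1$ concave function with $\psi'(1)=0$. Let $\sigma\in\mathbb R$ be a constant and $c:[0,+\infty)\to\mathbb R$ a continuous function such that either ($c\ge0$ and $\sigma\le1$) or ($c\le0$ and $\sigma\ge1$). Suppose $u:V\times[0,\infty)\to(0,\infty)$ is a positive solution of $\partial_tu=\Delta u+c(t)u^\sigma$ on $V$. Then, at every vertex and every time, $$\mathcal L(-u\Delta^\psi u)\ge 2u\Gamma_2^\psi(u)+c\,u^\sigma\Delta^\psi u,$$ where $\mathcal L=\Delta-\partial_t$.
   Context: Graphs: $G=(V,E)$ is a connected, locally finite graph; each edge $xy$ carries a weight $w_{xy}>0$ (possibly asymmetric), and $\mu:V\to(0,\infty)$ is a vertex measure; $y\sim x$ means $xy\in E$. Laplacian: $\Delta f(x)=\frac{1}{\mu(x)}\sum_{y\sim x}w_{xy}(f(y)-f(x))$. For $f:V\to(0,\infty)$: $\Delta^\psi f(x)=\Delta\big[\psi\big(\tfrac{f}{f(x)}\big)\big](x)$; $(\Omega^\psi f)(x)=\Delta\big[\psi'\big(\tfrac{f}{f(x)}\big)\tfrac{f}{f(x)}\big(\tfrac{\Delta f}{f}-\tfrac{\Delta f(x)}{f(x)}\big)\big](x)$; $2\Gamma_2^\psi(f)=\Omega^\psi f+\frac{\Delta f\,\Delta^\psi f}{f}-\frac{\Delta(f\Delta^\psi f)}{f}$. A positive solution is continuously differentiable in $t$, and all operators are applied to $u(\cdot,t)$ at each fixed time. *)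

(* Defs.v *)
From Stdlib Require Import Reals List Relations.
From Coquelicot Require Import Coquelicot.
Open Scope R_scope.

(* A graph on the vertex type V is given by its (finite, duplicate-free)
   neighbour lists: [In y (nbrs x)] means y ~ x, i.e. xy is an edge. *)

Definition adj {V : Type} (nbrs : V -> list V) (x y : V) : Prop := In y (nbrs x).

(* Standing assumptions: undirected simple graph, locally finite (finite
   neighbour lists), connected; positive (possibly asymmetric) edge weights
   w x y on edges; positive vertex measure mu. *)
Definition weighted_graph {V : Type} (nbrs : V -> list V)
  (w : V -> V -> R) (mu : V -> R) : Prop :=
  (forall x, NoDup (nbrs x)) /\
  (forall x y, In y (nbrs x) <-> In x (nbrs y)) /\
  (forall x, ~ In x (nbrs x)) /\
  (forall x y, clos_refl_trans V (adj nbrs) x y) /\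
  (forall x y, In y (nbrs x) -> 0 < w x y) /\
  (forall x, 0 < mu x).

Definition Lap {V : Type} (nbrs : V -> list V) (w : V -> V -> R) (mu : V -> R)
  (f : V -> R) (x : V) : R :=
  / mu x * fold_right Rplus 0 (map (fun y => w x y * (f y - f x)) (nbrs x)).

Definition Lap_psi {V : Type} nbrs w mu (psi : R -> R) (f : V -> R) (x : V) : R :=
  Lap nbrs w mu (fun y => psi (f y / f x)) x.

Definition Omega_psi {V : Type} nbrs w mu (dpsi : R -> R) (f : V -> R) (x : V) : R :=
  Lap nbrs w mu
    (fun y => dpsi (f y / f x) * (f y / f x) *
              (Lap nbrs w mu f y / f y - Lap nbrs w mu f x / f x)) x.

Definition Gamma2_psi {V : Type} nbrs w mu (psi dpsi : R -> R) (f : V -> R) (x : V) : R :=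
  / 2 * (Omega_psi nbrs w mu dpsi f x
         + Lap nbrs w mu f x * Lap_psi nbrs w mu psi f x / f x
         - Lap nbrs w mu (fun y => f y * Lap_psi nbrs w mu psi f y) x / f x).

(* [deriv_half g t d]: g has derivative d at t relative to [0,+oo)
   (two-sided for t > 0, right derivative at t = 0). *)
Definition deriv_half (g : R -> R) (t d : R) : Prop :=
  filterlim (fun s => (g s - g t) / (s - t))
    (within (fun s => 0 <= s /\ s <> t) (locally t)) (locally d).

Definition cont_half (g : R -> R) (t : R) : Prop :=
  filterlim g (within (fun s => 0 <= s) (locally t)) (locally (g t)).

(* Main.v *)
Require Import Defs.
From Stdlib Require Import Reals List Relations Lra.
From Coquelicot Require Import Coquelicot.
Open Scope R_scope.

Definition Ft (t : R) := within (fun s => 0 <= s /\ s <> t) (locally t).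
#[global] Instance Ft_filter t : Filter (Ft t).
Proof. apply within_filter, locally_filter. Qed.

Lemma lim_plus t (f g : R -> R) a b :
  filterlim f (Ft t) (locally a) -> filterlim g (Ft t) (locally b) ->
  filterlim (fun s => f s + g s) (Ft t) (locally (a + b)).
Proof.
  intros Hf Hg. eapply filterlim_comp_2; [exact Hf|exact Hg|].
  apply (filterlim_plus (K:=R_AbsRing) (V:=R_NormedModule)).
Qed.

Lemma lim_mult t (f g : R -> R) a b :
  filterlim f (Ft t) (locally a) -> filterlim g (Ft t) (locally b) ->
  filterlim (fun s => f s * g s) (Ft t) (locally (a * b)).
Proof.
  intros Hf Hg. eapply filterlim_comp_2; [exact Hf|exact Hg|].
  apply (filterlim_mult (K:=R_AbsRing)).
Qed.

Lemma lim_id t : filterlim (fun s => s) (Ft t) (locally t).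
Proof.
  intros P HP. unfold Ft, within, filtermap. apply filter_imp with P; auto.
Qed.

Lemma ball_R (a e b : R) : ball a e b <-> Rabs (b - a) < e.
Proof. reflexivity. Qed.

Lemma dh_ext_d g t d d' : deriv_half g t d -> d = d' -> deriv_half g t d'.
Proof. intros H ->; exact H. Qed.

Lemma dh_cont g t d : deriv_half g t d -> filterlim g (Ft t) (locally (g t)).
Proof.
  intros H.
  apply filterlim_ext_loc with (fun s => g t + ((g s - g t) / (s - t)) * (s - t)).
  - unfold Ft, within. apply filter_forall. intros s [_ Hs].
    field. lra.
  - cut (filterlim (fun s => g t + (g s - g t) / (s - t) * (s - t)) (Ft t)
           (locally (g t + d * (t + - t)))).
    { intro K. replace (g t + d * (t + - t)) with (g t) in K by ring. exact K. }
    apply lim_plus; [apply filterlim_const|].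
    apply lim_mult; [exact H|].
    apply lim_plus; [apply lim_id|apply filterlim_const].
Qed.

Lemma dh_const k t : deriv_half (fun _ => k) t 0.
Proof.
  unfold deriv_half.
  apply filterlim_ext_loc with (fun _ => 0).
  - unfold within. apply filter_forall. intros s [_ Hs]. field. lra.
  - apply filterlim_const.
Qed.

Lemma dh_plus f g t df dg : deriv_half f t df -> deriv_half g t dg ->
  deriv_half (fun s => f s + g s) t (df + dg).
Proof.
  intros Hf Hg. unfold deriv_half.
  apply filterlim_ext_loc with (fun s => (f s - f t)/(s-t) + (g s - g t)/(s-t)).
  - unfold within. apply filter_forall. intros s [_ Hs]. field. lra.
  - apply lim_plus; assumption.
Qed.

Lemma dh_mult f g t df dg : deriv_half f t df -> deriv_half g t dg ->
  deriv_half (fun s => f s * g s) t (df * g t + f t * dg).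
Proof.
  intros Hf Hg. unfold deriv_half.
  apply filterlim_ext_loc with (fun s => (f s - f t)/(s-t) * g s + f t * ((g s - g t)/(s-t))).
  - unfold within. apply filter_forall. intros s [_ Hs]. field. lra.
  - apply lim_plus; apply lim_mult; try assumption.
    + apply (dh_cont _ _ _ Hg).
    + apply filterlim_const.
Qed.

Lemma dh_chain (phi : R -> R) a t da dphi :
  deriv_half a t da -> is_derive phi (a t) dphi ->
  deriv_half (fun s => phi (a s)) t (dphi * da).
Proof.
  intros Ha Hp. apply is_derive_Reals in Hp.
  set (z := a t) in *.
  set (Q := fun y => if Req_EM_T y z then dphi else (phi y - phi z) / (y - z)).
  assert (HQ : filterlim Q (locally z) (locally dphi)).
  { apply filterlim_locally. intros eps.
    destruct (Hp eps (cond_pos eps)) as [delta Hd].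
    exists delta. intros y Hy. apply ball_R in Hy. apply ball_R.
    unfold Q. destruct (Req_EM_T y z) as [E|E].
    - rewrite Rminus_eq_0, Rabs_R0. apply cond_pos.
    - specialize (Hd (y - z)). rewrite Rplus_minus in Hd.
      apply Hd; [lra|exact Hy]. }
  unfold deriv_half.
  apply filterlim_ext_loc with (fun s => Q (a s) * ((a s - a t)/(s - t))).
  - unfold within. apply filter_forall. intros s [_ Hs]. unfold Q. fold z.
    destruct (Req_EM_T (a s) z) as [E|E].
    + rewrite E. unfold Rminus. rewrite !Rplus_opp_r. field. lra.
    + field. split; lra.
  - apply lim_mult; [|exact Ha].
    eapply filterlim_comp; [apply (dh_cont _ _ _ Ha)|exact HQ].
Qed.

Lemma dh_ext g1 g2 t d : 0 <= t -> (forall s, 0 <= s -> g1 s = g2 s) ->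
  deriv_half g1 t d -> deriv_half g2 t d.
Proof.
  intros Ht He H. unfold deriv_half in *.
  eapply filterlim_ext_loc; [|exact H].
  unfold within. apply filter_forall. intros s [Hs _]. rewrite !He; auto.
Qed.

Lemma dh_sum {V : Type} (l : list V) (F : V -> R -> R) (dF : V -> R) t :
  (forall y, In y l -> deriv_half (F y) t (dF y)) ->
  deriv_half (fun s => fold_right Rplus 0 (map (fun y => F y s) l)) t
    (fold_right Rplus 0 (map dF l)).
Proof.
  induction l as [|y l IH]; intros H; simpl.
  - apply dh_const.
  - apply dh_plus; [apply H; simpl; auto|apply IH; intros; apply H; simpl; auto].
Qed.

Lemma Rpower_pos x e : 0 < Rpower x e.
Proof. unfold Rpower. apply exp_pos. Qed.

Lemma pow_mono_neg a b e : 0 < a -> 0 < b -> e <= 0 ->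
  0 <= (Rpower b e - Rpower a e) * (a - b).
Proof.
  intros Ha Hb He.
  assert (K : forall p q, 0 < p <= q -> Rpower q e <= Rpower p e).
  { intros p q Hpq.
    assert (E1 : Rpower q e = / Rpower q (- e)).
    { rewrite <- Rpower_Ropp, Ropp_involutive. reflexivity. }
    assert (E2 : Rpower p e = / Rpower p (- e)).
    { rewrite <- Rpower_Ropp, Ropp_involutive. reflexivity. }
    rewrite E1, E2.
    apply Rinv_le_contravar; [apply Rpower_pos|].
    apply Rle_Rpower_l; lra. }
  destruct (Rle_or_lt a b) as [H|H].
  - assert (Rpower b e <= Rpower a e) by (apply K; lra). nra.
  - assert (Rpower a e <= Rpower b e) by (apply K; lra). nra.
Qed.

Lemma pow_mono_pos a b e : 0 < a -> 0 < b -> 0 <= e ->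
  (Rpower b e - Rpower a e) * (a - b) <= 0.
Proof.
  intros Ha Hb He.
  destruct (Rle_or_lt a b) as [H|H].
  - assert (Rpower a e <= Rpower b e) by (apply Rle_Rpower_l; lra). nra.
  - assert (Rpower b e <= Rpower a e) by (apply Rle_Rpower_l; lra). nra.
Qed.

Lemma Rpower_div x s : 0 < x -> Rpower x s / x = Rpower x (s - 1).
Proof.
  intros Hx. replace s with ((s - 1) + 1) at 1 by ring.
  rewrite Rpower_plus, Rpower_1 by lra. field. lra.
Qed.

Section Concave.
Variables (psi dpsi : R -> R).
Hypothesis Hpsi_deriv : forall s, 0 < s -> is_derive psi s (dpsi s).
Hypothesis Hpsi_concave : forall a b l, 0 < a -> 0 < b -> 0 <= l <= 1 ->
      l * psi a + (1 - l) * psi b <= psi (l * a + (1 - l) * b).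

Lemma tangent a b : 0 < a -> 0 < b -> psi b <= psi a + dpsi a * (b - a).
Proof.
  intros Ha Hb.
  destruct (Rle_or_lt (psi b) (psi a + dpsi a * (b - a))) as [H|H]; [exact H|exfalso].
  set (K := psi b - psi a - dpsi a * (b - a)).
  assert (HK : 0 < K) by (unfold K; lra).
  destruct (Req_dec b a) as [E|E].
  { subst. unfold K in HK. lra. }
  assert (Hba : 0 < Rabs (b - a)) by (apply Rabs_pos_lt; lra).
  pose proof (proj1 (is_derive_Reals _ _ _) (Hpsi_deriv a Ha)) as D.
  destruct (D (K / Rabs (b - a))) as [delta Hd].
  { apply Rdiv_lt_0_compat; lra. }
  set (l := Rmin (1/2) (delta / (2 * Rabs (b - a)))).
  assert (Hl0 : 0 < l).
  { unfold l. apply Rmin_glb_lt; [lra|]. apply Rdiv_lt_0_compat; [apply cond_pos|lra]. }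
  assert (Hl1 : l <= 1/2) by (unfold l; apply Rmin_l).
  assert (Hl2 : l <= delta / (2 * Rabs (b - a))) by (unfold l; apply Rmin_r).
  set (h := l * (b - a)).
  assert (Hh : h <> 0).
  { unfold h. intro Z. apply Rmult_integral in Z. destruct Z; lra. }
  assert (Habs : Rabs h = l * Rabs (b - a)).
  { unfold h. rewrite Rabs_mult, Rabs_pos_eq; lra. }
  assert (Hhd : Rabs h < delta).
  { rewrite Habs.
    assert (l * Rabs (b - a) <= delta / (2 * Rabs (b - a)) * Rabs (b - a))
      by (apply Rmult_le_compat_r; lra).
    replace (delta / (2 * Rabs (b - a)) * Rabs (b - a)) with (delta / 2) in H0
      by (field; lra).
    pose proof (cond_pos delta). lra. }
  specialize (Hd h Hh Hhd).
  set (q := (psi (a + h) - psi a) / h) in Hd.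
  assert (Eq : psi (a + h) - psi a = q * h) by (unfold q; field; exact Hh).
  assert (Hl01 : 0 <= l <= 1) by lra.
  assert (Hc := Hpsi_concave b a l Hb Ha Hl01).
  replace (l * b + (1 - l) * a) with (a + h) in Hc by (unfold h; ring).
  assert (Hm : h * (q - dpsi a) < l * K).
  { apply Rle_lt_trans with (Rabs (h * (q - dpsi a))); [apply Rle_abs|].
    rewrite Rabs_mult, Habs.
    replace (l * K) with ((l * Rabs (b - a)) * (K / Rabs (b - a))) by (field; lra).
    apply Rmult_lt_compat_l; [nra|exact Hd]. }
  assert (Hhd2 : h * dpsi a = l * (dpsi a * (b - a))) by (unfold h; ring).
  unfold K in Hm. clearbody h q. clear - Hm Hc Eq Hhd2 Hl0. nra.
Qed.

Lemma dpsi_sign r : dpsi 1 = 0 -> 0 < r -> 0 <= dpsi r * (1 - r).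
Proof.
  intros H0 Hr.
  assert (H1 : 0 < 1) by lra.
  pose proof (tangent r 1 Hr H1).
  pose proof (tangent 1 r H1 Hr).
  nra.
Qed.
End Concave.

Lemma prod_sign p X d : 0 <= p * d -> 0 <= X * d -> d <> 0 -> 0 <= p * X.
Proof.
  intros H1 H2 Hd.
  assert (Hdd : 0 < d * d) by (destruct (Rlt_or_le 0 d); nra).
  assert (0 <= (p * X) * (d * d)) by (replace ((p * X) * (d * d)) with ((p*d)*(X*d)) by ring;
     apply Rmult_le_pos; auto).
  destruct (Rle_or_lt 0 (p * X)) as [H3|H3]; auto. nra.
Qed.

Lemma term_sign (psi dpsi : R -> R) sigma c a b :
  (forall s, 0 < s -> is_derive psi s (dpsi s)) ->
  (forall a b l, 0 < a -> 0 < b -> 0 <= l <= 1 ->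
      l * psi a + (1 - l) * psi b <= psi (l * a + (1 - l) * b)) ->
  dpsi 1 = 0 ->
  ((0 <= c /\ sigma <= 1) \/ (c <= 0 /\ 1 <= sigma)) ->
  0 < a -> 0 < b ->
  0 <= dpsi (b / a) * (b / a) * (c * (Rpower b sigma / b - Rpower a sigma / a)).
Proof.
  intros Hd Hc H1 Hs Ha Hb.
  rewrite !Rpower_div by assumption.
  set (X := Rpower b (sigma - 1) - Rpower a (sigma - 1)).
  assert (Hr : 0 < b / a) by (apply Rdiv_lt_0_compat; auto).
  pose proof (dpsi_sign psi dpsi Hd Hc (b / a) H1 Hr) as Hp.
  assert (Hp' : 0 <= dpsi (b / a) * (a - b)).
  { replace (dpsi (b / a) * (a - b)) with (a * (dpsi (b / a) * (1 - b / a))) by (field; lra).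
    apply Rmult_le_pos; lra. }
  destruct (Req_dec a b) as [E|E].
  { subst. unfold X. rewrite Rminus_eq_0. rewrite !Rmult_0_r. lra. }
  destruct Hs as [[Hc0 Hs]|[Hc0 Hs]].
  - pose proof (pow_mono_neg a b (sigma - 1) Ha Hb ltac:(lra)) as HX. fold X in HX.
    assert (0 <= dpsi (b / a) * X) by (apply (prod_sign _ _ (a - b)); auto; lra).
    replace (dpsi (b / a) * (b / a) * (c * X)) with ((dpsi (b / a) * X) * ((b / a) * c)) by ring.
    apply Rmult_le_pos; auto. apply Rmult_le_pos; lra.
  - pose proof (pow_mono_pos a b (sigma - 1) Ha Hb ltac:(lra)) as HX. fold X in HX.
    assert (0 <= dpsi (b / a) * (- X)) by (apply (prod_sign _ _ (a - b)); auto; lra).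
    replace (dpsi (b / a) * (b / a) * (c * X)) with ((dpsi (b / a) * (- X)) * ((b / a) * (- c))) by ring.
    apply Rmult_le_pos; auto. apply Rmult_le_pos; lra.
Qed.

Section Sums.
Context {V : Type} (l : list V).
Definition Ssum (F : V -> R) := fold_right Rplus 0 (map F l).
Lemma S_ext F G : (forall y, In y l -> F y = G y) -> Ssum F = Ssum G.
Proof. unfold Ssum; induction l as [|a l' IH]; simpl; intros H; auto.
  rewrite H by auto. rewrite IH; auto. Qed.
Lemma S_plus F G : Ssum (fun y => F y + G y) = Ssum F + Ssum G.
Proof. unfold Ssum; induction l as [|a l' IH]; simpl; [ring|rewrite IH; ring]. Qed.
Lemma S_scal k F : Ssum (fun y => k * F y) = k * Ssum F.
Proof. unfold Ssum; induction l as [|a l' IH]; simpl; [ring|rewrite IH; ring]. Qed.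
Lemma S_nonneg F : (forall y, In y l -> 0 <= F y) -> 0 <= Ssum F.
Proof. unfold Ssum; induction l as [|a l' IH]; simpl; intros H; [lra|].
  apply Rplus_le_le_0_compat; auto. Qed.
End Sums.

Lemma dh_scal k f t d : deriv_half f t d -> deriv_half (fun s => k * f s) t (k * d).
Proof. intros H. eapply dh_ext_d; [apply (dh_mult (fun _ => k) f t 0 d (dh_const k t) H)|]. simpl. ring. Qed.

Lemma dh_opp f t d : 0 <= t -> deriv_half f t d -> deriv_half (fun s => - f s) t (- d).
Proof. intros Ht H. eapply dh_ext_d; [eapply dh_ext; [exact Ht| |apply (dh_scal (-1) _ _ _ H)]|ring].
  intros; simpl; ring. Qed.

Lemma dh_ext_all g1 g2 t d : (forall s, g1 s = g2 s) ->
  deriv_half g1 t d -> deriv_half g2 t d.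
Proof.
  intros He H. unfold deriv_half in *.
  eapply filterlim_ext_loc; [|exact H].
  unfold within. apply filter_forall. intros s _. rewrite !He; auto.
Qed.

Lemma dh_minus f g t df dg : deriv_half f t df -> deriv_half g t dg ->
  deriv_half (fun s => f s - g s) t (df - dg).
Proof. intros Hf Hg.
  eapply dh_ext_d; [eapply dh_ext_all; [|apply (dh_plus f (fun s => -1 * g s) t df (-1 * dg) Hf (dh_scal (-1) _ _ _ Hg))]|].
  - intros s; simpl; ring.
  - ring. Qed.

Definition Dy {V : Type} (dpsi : R -> R) (u du : V -> R -> R) (x : V) (t : R) (y : V) : R :=
  dpsi (u y t / u x t) * (du y t * / u x t + u y t * (- 1 / u x t ^ 2 * du x t)).

Theorem mainTheorem11
  (V : Type) (nbrs : V -> list V) (w : V -> V -> R) (mu : V -> R)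
  (Hgraph : weighted_graph nbrs w mu)
  (psi dpsi : R -> R)
  (Hpsi_deriv : forall s, 0 < s -> is_derive psi s (dpsi s))
  (Hpsi_C1 : forall s, 0 < s -> continuous dpsi s)
  (Hpsi_concave : forall a b l, 0 < a -> 0 < b -> 0 <= l <= 1 ->
      l * psi a + (1 - l) * psi b <= psi (l * a + (1 - l) * b))
  (Hpsi1 : dpsi 1 = 0)
  (sigma : R) (c : R -> R)
  (Hc_cont : forall t, 0 <= t -> cont_half c t)
  (Hsign : ((forall t, 0 <= t -> 0 <= c t) /\ sigma <= 1) \/
           ((forall t, 0 <= t -> c t <= 0) /\ 1 <= sigma))
  (u du : V -> R -> R)
  (Hu_pos : forall x t, 0 <= t -> 0 < u x t)
  (Hu_deriv : forall x t, 0 <= t -> deriv_half (u x) t (du x t))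
  (Hu_C1 : forall x t, 0 <= t -> cont_half (du x) t)
  (Hu_eq : forall x t, 0 <= t ->
      du x t = Lap nbrs w mu (fun y => u y t) x + c t * Rpower (u x t) sigma) :
  forall (x : V) (t : R), 0 <= t ->
    exists D : R,
      deriv_half (fun s => - u x s * Lap_psi nbrs w mu psi (fun y => u y s) x) t D /\
      Lap nbrs w mu (fun y => - u y t * Lap_psi nbrs w mu psi (fun z => u z t) y) x - D
      >= 2 * u x t * Gamma2_psi nbrs w mu psi dpsi (fun y => u y t) x
         + c t * Rpower (u x t) sigma * Lap_psi nbrs w mu psi (fun y => u y t) x.
Proof.
  intros x t Ht.
  destruct Hgraph as (_ & _ & _ & _ & Hw & Hmu).
  assert (Hux : 0 < u x t) by auto.
  exists (- du x t * Lap_psi nbrs w mu psi (fun y => u y t) x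
          + - u x t * (/ mu x * Ssum (nbrs x) (fun y => w x y * (Dy dpsi u du x t y - Dy dpsi u du x t x)))).
  split.
  -
    assert (Hy : forall y, deriv_half (fun s => psi (u y s / u x s)) t (Dy dpsi u du x t y)).
    { intros y.
      assert (Huy : 0 < u y t) by auto.
      assert (Hinv : deriv_half (fun s => / u x s) t (- 1 / u x t ^ 2 * du x t)).
      { apply (dh_chain (fun z => / z) (u x)); [auto|].
        auto_derive; [lra|]. field. lra. }
      pose proof (dh_mult (u y) (fun s => / u x s) t _ _ (Hu_deriv y t Ht) Hinv) as Hm.
      unfold Dy.
      apply (dh_chain psi (fun s => u y s * / u x s)); [exact Hm|].
      apply Hpsi_deriv. apply Rdiv_lt_0_compat; auto. }
    pose proof (dh_sum (nbrs x) (fun y s => w x y * (psi (u y s / u x s) - psi (u x s / u x s)))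
                  (fun y => w x y * (Dy dpsi u du x t y - Dy dpsi u du x t x)) t) as HS.
    assert (HS' : deriv_half (fun s => / mu x * fold_right Rplus 0
               (map (fun y => w x y * (psi (u y s / u x s) - psi (u x s / u x s))) (nbrs x))) t
               (/ mu x * Ssum (nbrs x) (fun y => w x y * (Dy dpsi u du x t y - Dy dpsi u du x t x)))).
    { apply dh_scal. apply HS. intros y _. apply dh_scal. apply dh_minus; apply Hy. }
    pose proof (dh_mult _ _ t _ _ (dh_opp _ _ _ Ht (Hu_deriv x t Ht)) HS') as HM.
    exact HM.
  -
    set (T := fun y => w x y * (dpsi (u y t / u x t) * (u y t / u x t) *
               (c t * (Rpower (u y t) sigma / u y t - Rpower (u x t) sigma / u x t)))).
    assert (HT : 0 <= Ssum (nbrs x) T).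
    { apply S_nonneg. intros y Hy. unfold T.
      apply Rmult_le_pos; [apply Rlt_le; auto|].
      apply term_sign with psi; auto.
      destruct Hsign as [[H1 H2]|[H1 H2]]; [left|right]; auto. }
    assert (E1 : Lap nbrs w mu (fun y => - u y t * Lap_psi nbrs w mu psi (fun z => u z t) y) x
               = - Lap nbrs w mu (fun y => u y t * Lap_psi nbrs w mu psi (fun z => u z t) y) x).
    { unfold Lap. change (fold_right Rplus 0 (map ?F ?l)) with (Ssum l F).
      rewrite (S_ext _ _ (fun y => -1 * (w x y * (u y t * Lap_psi nbrs w mu psi (fun z => u z t) y
                - u x t * Lap_psi nbrs w mu psi (fun z => u z t) x)))).
      - rewrite S_scal. ring.
      - intros; ring. }
    assert (E2 : / mu x * Ssum (nbrs x) (fun y => w x y * (Dy dpsi u du x t y - Dy dpsi u du x t x))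
               = Omega_psi nbrs w mu dpsi (fun y => u y t) x + / mu x * Ssum (nbrs x) T).
    { assert (HL : forall z, Lap nbrs w mu (fun y => u y t) z = du z t - c t * Rpower (u z t) sigma).
      { intros z. rewrite (Hu_eq z t Ht). ring. }
      set (Lf := fun z => Lap nbrs w mu (fun y => u y t) z).
      assert (EO : Omega_psi nbrs w mu dpsi (fun y => u y t) x = / mu x * Ssum (nbrs x)
        (fun y => w x y * (dpsi (u y t / u x t) * (u y t / u x t) * (Lf y / u y t - Lf x / u x t)
           - dpsi (u x t / u x t) * (u x t / u x t) * (Lf x / u x t - Lf x / u x t)))) by reflexivity.
      rewrite EO.
      rewrite <- Rmult_plus_distr_l. f_equal.
      rewrite <- S_plus. apply S_ext. intros y Hy.
      assert (Huy : 0 < u y t) by auto.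
      unfold T, Dy, Lf. rewrite !HL.
      field. split; lra. }
    rewrite E1, E2. unfold Gamma2_psi. cbv beta.
    rewrite (Hu_eq x t Ht).
    set (B := Lap nbrs w mu (fun y => u y t * Lap_psi nbrs w mu psi (fun z => u z t) y) x).
    set (Om := Omega_psi nbrs w mu dpsi (fun y => u y t) x).
    set (Px := Lap_psi nbrs w mu psi (fun y => u y t) x).
    set (Lx := Lap nbrs w mu (fun y => u y t) x).
    set (Rx := Rpower (u x t) sigma).
    set (ST := Ssum (nbrs x) T).
    assert (Hmu0 : 0 < mu x) by auto.
    assert (Key : - B - (- (Lx + c t * Rx) * Px + - u x t * (Om + / mu x * ST))
                  - (2 * u x t * (/ 2 * (Om + Lx * Px / u x t - B / u x t)) + c t * Rx * Px)
                  = u x t * / mu x * ST).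
    { field. lra. }
    assert (0 <= u x t * / mu x * ST).
    { apply Rmult_le_pos; auto. apply Rmult_le_pos; [lra|]. apply Rlt_le, Rinv_0_lt_compat; lra. }
    lra.
Qed.
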